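(* Let $G$ be a finite graph, $(X^+,X^-)$ a pair of subsets of $V(G)$, $c\in V(G)$ and $r$ an integer such that $X^+\subseteq B_G(c,r)$ and $X^-\cap B_G(c,r)=\emptyset$. Let $X=X^+\cup X^-$, let $(A_1,A_2)$ be a separation of $G$ with $c\in A_1$ and $X\subseteq A_2$, and let $S=A_1\cap A_2$. Then \[A_2\cap\bigcup_{v\in S}B_G(v,r^+(v))\subseteq A_2\cap B_G(c,r)\subseteq A_2\cap\bigcup_{v\in S}B_G(v,r^-(v)-1).\]
   Context: $\mathrm{dist}_G$ is shortest-path distance ($\infty$ between different components), and $B_G(v,\rho)=\{w\in V(G):\mathrm{dist}_G(v,w)\le\rho\}$ for $\rho\in\mathbb{Z}\cup\{\pm\infty\}$ (balls of negative radius are empty; $\infty-1=\infty$, $r-\infty=-\infty$). A separation of $G$ is a pair $(A_1,A_2)$ with $A_1\cup A_2=V(G)$ and no edge between $A_1\setminus A_2$ and $A_2\setminus A_1$. Conventions: $\min\emptyset=\infty$, $\max\emptyset=-1$. For $v\in V(G)$: $r^+(v)=\max\{\mathrm{dist}_G(v,x):x\in X\cap B_G(v,r-\mathrm{dist}_G(c,v))\}$ and $r^-(v)=\min\{\mathrm{dist}_G(v,x):x\in X^-\}$. *)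

(* Defs.v *)
From mathcomp Require Import all_boot all_order all_algebra.
Set Implicit Arguments. Unset Strict Implicit. Unset Printing Implicit Defensive.
Import Order.TTheory GRing.Theory Num.Theory.

Inductive xint := XNInf | XFin of int | XPInf.

Definition xle (a b : xint) : bool :=
  match a, b with
  | XNInf, _ => true
  | _, XPInf => true
  | XFin x, XFin y => (x <= y)%R
  | _, _ => false
  end.

Definition xmax (a b : xint) : xint := if xle a b then b else a.
Definition xmin (a b : xint) : xint := if xle a b then a else b.

Definition xpred (a : xint) : xint :=
  match a with XFin x => XFin (x - 1)%R | _ => a end.

Definition int_sub_dist (r : int) (d : xint) : xint :=
  match d with
  | XFin x => XFin (r - x)%R
  | XPInf => XNInf
  | XNInf => XPInf
  end.

Section Graph.
Variable T : finType.
Variable e : rel T.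

Definition simple_graph : Prop := symmetric e /\ irreflexive e.

Fixpoint walk_k (k : nat) (v w : T) : bool :=
  match k with
  | 0 => v == w
  | k'.+1 => [exists u, e v u && walk_k k' u w]
  end.

(* shortest-path distance: the least k with a walk of length k from v to w
   (such k, if it exists, is < #|T|); +oo if no walk exists. *)
Definition dist (v w : T) : xint :=
  let k := find (fun k => walk_k k v w) (iota 0 #|T|) in
  if k < #|T| then XFin (Posz k) else XPInf.

Definition ball (v : T) (rho : xint) : {set T} :=
  [set w | xle (dist v w) rho].

Definition separation (A1 A2 : {set T}) : Prop :=
  A1 :|: A2 = setT /\
  forall x y, x \in A1 :\: A2 -> y \in A2 :\: A1 -> ~~ e x y.

Definition rplus (X : {set T}) (c : T) (r : int) (v : T) : xint :=
  \big[xmax/XFin (-1)%R]_(x in X :&: ball v (int_sub_dist r (dist c v))) dist v x.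

Definition rminus (Xm : {set T}) (v : T) : xint :=
  \big[xmin/XPInf]_(x in Xm) dist v x.

End Graph.

(* Main.v *)
Require Import Defs.
From mathcomp Require Import all_boot all_order all_algebra.
From mathcomp Require Import zify.
Import Order.TTheory GRing.Theory Num.Theory.
Set Implicit Arguments. Unset Strict Implicit. Unset Printing Implicit Defensive.

Section L.
Variable T : finType.
Variable e : rel T.

Lemma walk_path k a b : walk_k e k a b ->
  exists p, [/\ size p = k, path e a p & last a p = b].
Proof.
elim: k a => [|k IH] a /=; first by move/eqP=> ->; exists [::].
case/existsP=> u /andP[eau /IH [p [sp pp lp]]].
by exists (u :: p); rewrite /= eau sp pp lp.
Qed.

Lemma path_walk p a : path e a p -> walk_k e (size p) a (last a p).
Proof.
elim: p a => [|u p IH] a /=; first by [].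
case/andP=> eau pp; apply/existsP; exists u; rewrite eau; exact: IH.
Qed.

Lemma walk_cat k1 k2 a m b :
  walk_k e k1 a m -> walk_k e k2 m b -> walk_k e (k1 + k2) a b.
Proof.
elim: k1 a => [|k IH] a /=; first by move/eqP=> ->; rewrite add0n.
case/existsP=> u /andP[eau w1] w2; rewrite ?addSn /=.
apply/existsP; exists u; rewrite eau; exact: IH.
Qed.

Lemma walk_short k a b : walk_k e k a b ->
  exists2 k', k' < #|T| & (k' <= k) && walk_k e k' a b.
Proof.
move=> w; case: (ltnP k #|T|) => hk; first by exists k; rewrite // leqnn /= w.
case: (walk_path w) => p [sp pp lp].
move: lp; case: (shortenP pp) => p' pp' up' _ lp'.
have hs : size p' < #|T|.
  have := max_card (mem (a :: p')).
  by rewrite (card_uniqP up').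
exists (size p') => //.
rewrite (leq_trans (ltnW hs) hk) /=.
by rewrite -lp'; apply: path_walk.
Qed.

Lemma dist_walk a b n : dist e a b = XFin n ->
  exists k, n = Posz k /\ walk_k e k a b.
Proof.
rewrite /dist; case: ifP => // hf [<-].
exists (find (fun k => walk_k e k a b) (iota 0 #|T|)); split => //.
have hh : has (fun k => walk_k e k a b) (iota 0 #|T|).
  by rewrite has_find size_iota.
have := nth_find 0 hh. by rewrite nth_iota // add0n.
Qed.

Lemma walk_dist k a b : walk_k e k a b ->
  exists2 k', k' <= k & dist e a b = XFin (Posz k') /\ walk_k e k' a b.
Proof.
case/walk_short=> j hj /andP[hjk wj].
have hh : has (fun k => walk_k e k a b) (iota 0 #|T|).
  by apply/hasP; exists j => //; rewrite mem_iota add0n hj.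
have hf : find (fun k => walk_k e k a b) (iota 0 #|T|) <= j.
  rewrite leqNgt; apply/negP => hlt.
  have := before_find 0 hlt; rewrite nth_iota // add0n wj //.
exists (find (fun k => walk_k e k a b) (iota 0 #|T|)).
  exact: leq_trans hjk.
have hlt : find (fun k => walk_k e k a b) (iota 0 #|T|) < #|T|.
  exact: leq_ltn_trans hj.
rewrite /dist hlt; split => //.
have := nth_find 0 hh. by rewrite nth_iota // add0n.
Qed.

Lemma dist_nninf a b : dist e a b <> XNInf.
Proof. by rewrite /dist; case: ifP. Qed.

Lemma dist_nonneg a b : ~~ xle (dist e a b) (XFin (-1)).
Proof.
case h: (dist e a b) => [|n|] //; first by have := @dist_nninf a b; rewrite h.
by case: (dist_walk h) => k [-> _].
Qed.

Lemma bigmaxP (I : finType) (P : pred I) (f : I -> xint) a :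
  ~~ xle a (XFin (-1)) -> xle a (\big[xmax/XFin (-1)]_(i | P i) f i) ->
  exists2 i, P i & xle a (f i).
Proof.
move=> h0; apply: (big_ind (fun y => xle a y -> exists2 i, P i & xle a (f i))).
- by move=> h; rewrite h in h0.
- move=> x y hx hy; rewrite /xmax; case: ifP => _; [exact: hy | exact: hx].
- by move=> i Pi h; exists i.
Qed.

Lemma bigminP (I : finType) (P : pred I) (f : I -> xint) (n : int) :
  (forall i, P i -> xle (XFin (n + 1)) (f i)) ->
  xle (XFin n) (xpred (\big[xmin/XPInf]_(i | P i) f i)).
Proof.
move=> h.
have: xle (XFin (n+1)) (\big[xmin/XPInf]_(i | P i) f i).
  apply: (big_ind (fun y => xle (XFin (n+1)) y)) => //.
  by move=> x y hx hy; rewrite /xmin; case: ifP.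
case: (\big[_/_]_(i | _) _) => //= z; lia.
Qed.

Lemma sep_walk A1 A2 k c w : separation e A1 A2 -> walk_k e k c w ->
  c \in A1 -> w \in A2 ->
  exists v i, [/\ v \in A1 :&: A2, i <= k, walk_k e i c v & walk_k e (k - i) v w].
Proof.
move=> [hU hsep]; elim: k c => [|k IH] c /=.
  move/eqP=> <- cA1 cA2; exists c, 0; split; rewrite /= ?eqxx ?inE ?cA1 //.
case/existsP=> u /andP[ecu wu] cA1 wA2.
case: (boolP (c \in A2)) => cA2.
  exists c, 0; split; rewrite /= ?eqxx ?inE ?cA1 //.
  by rewrite ?subn0 /=; apply/existsP; exists u; rewrite ecu.
have uA1 : u \in A1.
  apply/negPn/negP => uA1.
  have : u \in A1 :|: A2 by rewrite hU inE.
  rewrite inE (negbTE uA1) /= => uA2.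
  have := hsep c u; rewrite !inE cA1 cA2 uA1 uA2 ecu.
  by move=> /(_ isT isT).
case: (IH u wu uA1 wA2) => v [i [vS hik wi wr]].
exists v, i.+1; split => //.
by apply/existsP; exists u; rewrite ecu.
Qed.

End L.

Theorem lemma5p2 (T : finType) (e : rel T) (Xp Xm : {set T}) (c : T) (r : int)
  (A1 A2 : {set T}) :
  simple_graph e ->
  Xp \subset ball e c (XFin r) ->
  Xm :&: ball e c (XFin r) = set0 ->
  separation e A1 A2 ->
  c \in A1 ->
  Xp :|: Xm \subset A2 ->
  let X := Xp :|: Xm in
  let S := A1 :&: A2 in
  (A2 :&: \bigcup_(v in S) ball e v (rplus e X c r v) \subset A2 :&: ball e c (XFin r))
  /\
  (A2 :&: ball e c (XFin r) \subset
     A2 :&: \bigcup_(v in S) ball e v (xpred (rminus e Xm v))).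
Proof.
move=> _ hXp hXm hsep cA1 hXA X S; split.
  apply/subsetP => w; rewrite !inE => /andP[wA2 /bigcupP[v vS wb]].
  rewrite wA2 /=; rewrite inE /rplus in wb.
  case: (bigmaxP (@dist_nonneg _ e v w) wb) => x /setIP[_ xb] hwx.
  rewrite inE in xb.
  case hcv: (dist e c v) xb => [|dc|] xb.
  - by have := @dist_nninf _ e c v; rewrite hcv.
  - case: (dist_walk hcv) => kc [hdc wc].
    case hvx: (dist e v x) xb hwx => [|dx|] //= xb hwx.
      by have := @dist_nninf _ e v x; rewrite hvx.
    case hvw: (dist e v w) hwx => [|dw|] //= hwx.
      by have := @dist_nninf _ e v w; rewrite hvw.
    case: (dist_walk hvw) => kw [hdw ww].
    case: (walk_dist (walk_cat wc ww)) => j hj [hcw _].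
    rewrite hcw /=. subst. lia.
  - move: xb; case hvx: (dist e v x) => [|z|] // _; by have := @dist_nninf _ e v x; rewrite hvx.
apply/subsetP => w; rewrite !inE => /andP[wA2 wb].
rewrite wA2 /=.
case hcw: (dist e c w) wb => [|n|] //= wb.
  by have := @dist_nninf _ e c w; rewrite hcw.
case: (dist_walk hcw) => k [hn wk]; subst n.
case: (sep_walk hsep wk cA1 wA2) => v [i [vS hik wi wr]].
apply/bigcupP; exists v; first exact: vS.
case: (walk_dist wr) => dw hdw [hvw _].
rewrite inE hvw /rminus; apply: bigminP => x xXm.
case hvx: (dist e v x) => [|d|] //.
  by have := @dist_nninf _ e v x; rewrite hvx.
case: (dist_walk hvx) => kx [hd wx]; subst d.
case: (walk_dist (walk_cat wi wx)) => j hj [hcx _].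
have : x \notin ball e c (XFin r).
  apply/negP => xb.
  have : x \in Xm :&: ball e c (XFin r) by rewrite inE xXm xb.
  by rewrite hXm inE.
rewrite inE hcx /= => hjr.
lia.
Qed.
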